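(* Let $p/q$ (in lowest terms, $q>0$) be a convergent of the simple continued fraction expansion of $e$. If $q=(n!)^k$ for some integer $n\ge 0$ and some integer $k>0$, then $n/k<e$.
   Context: The convergents of $e$ are the rationals obtained by truncating the simple continued fraction expansion of $e$; they begin $2/1,3/1,8/3,11/4,19/7,87/32,\dots$. *)

(* Defs.v *)
From HB Require Import structures.
From mathcomp Require Import all_boot all_order all_algebra.
From mathcomp Require Import all_classical all_reals all_analysis.
Set Implicit Arguments. Unset Strict Implicit. Unset Printing Implicit Defensive.
Import Order.TTheory GRing.Theory Num.Theory.
Local Open Scope ring_scope.

Fixpoint cf_rem (R : realType) (x : R) (i : nat) : R :=
  match i with
  | 0%N => x
  | i'.+1 => (cf_rem x i' - (Num.floor (cf_rem x i'))%:~R)^-1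
  end.

Definition cf_pq (R : realType) (x : R) (i : nat) : int := Num.floor (cf_rem x i).

Fixpoint cfrac (s : seq int) : rat :=
  match s with
  | [::] => 0
  | [:: a] => a%:~R
  | a :: t => a%:~R + (cfrac t)^-1
  end.

Definition convergent (R : realType) (x : R) (m : nat) : rat :=
  cfrac [seq cf_pq x i | i <- iota 0 m.+1].

(* Main.v *)
Require Import Defs.
From HB Require Import structures.
From mathcomp Require Import all_boot all_order all_algebra.
From mathcomp Require Import all_classical all_reals all_analysis.
From mathcomp Require Import ring lra zify.
Import Order.TTheory GRing.Theory Num.Theory.
Local Open Scope ring_scope.


Local Open Scope nat_scope.

Lemma binom_bound a b : 'C(a + b, b) * (a ^ a * b ^ b) <= (a + b) ^ (a + b).
Proof.
rewrite expnDn.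
have hb : b < (a + b).+1 by rewrite ltnS leq_addl.
rewrite (bigD1 (Ordinal hb)) //= addnK.
exact: leq_addr.
Qed.

Lemma multi n k : 0 < n -> (n * k)`! <= k ^ (n * k) * n`! ^ k.
Proof.
move=> n0; elim: k => [|k IH]; first by rewrite muln0.
have E : n * k.+1 = n * k + n by rewrite mulnS addnC.
rewrite E.
set a := n * k.
have hbf := bin_fact (leq_addl a n).
rewrite addnK in hbf.
rewrite -hbf.
have hC : 'C(a + n, n) * k ^ a <= k.+1 ^ (a + n).
  have h := binom_bound a n.
  have ea : a ^ a * n ^ n = k ^ a * n ^ (a + n).
    by rewrite /a expnMn expnD mulnA [k ^ _ * _]mulnC.
  have eb : (a + n) ^ (a + n) = k.+1 ^ (a + n) * n ^ (a + n).
    by rewrite -E mulnC expnMn.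
  rewrite ea eb mulnA in h.
  have hp : 0 < n ^ (a + n) by rewrite expn_gt0 n0.
  by rewrite -(leq_pmul2r hp).
rewrite expnS (mulnC n`! (n`! ^ k)).
apply: (@leq_trans ('C(a + n, n) * (n`! * (k ^ a * n`! ^ k)))).
  by rewrite leq_mul2l leq_mul2l IH !orbT.
have -> : 'C(a + n, n) * (n`! * (k ^ a * n`! ^ k)) = ('C(a + n, n) * k ^ a) * (n`! ^ k * n`!).
  lia.
by rewrite !mulnA leq_mul2r leq_mul2r hC !orbT.
Qed.

Lemma k1 n : 3 <= n -> (n * 1).+1 * 1 ^ (n * 1) <= n`! ^ 1.
Proof.
rewrite muln1 exp1n muln1 expn1.
elim: n => // n IH; rewrite leq_eqVlt => /orP [/eqP <- // | hn].
have := IH hn; rewrite factS; nia.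
Qed.

Lemma k2 n : 6 <= n -> (n * 2).+1 * 2 ^ (n * 2) <= n`! ^ 2.
Proof.
elim: n => // n IH; rewrite leq_eqVlt => /orP [/eqP <- | hn].
  rewrite !factS fact0; lia.
have := IH hn.
rewrite factS expnMn.
have -> : 2 ^ (n.+1 * 2) = 2 ^ 2 * 2 ^ (n * 2) by rewrite mulSn expnD.
set X := 2 ^ (n * 2); set F := n`! ^ 2 => h.
have h1 : (2 + n * 2).+1 * 2 ^ 2 <= n.+1 ^ 2 * (n * 2).+1 by nia.
apply: (@leq_trans (n.+1 ^ 2 * ((n * 2).+1 * X))); last by rewrite leq_mul2l h orbT.
have := leq_mul h1 (leqnn X); lia.
Qed.

Lemma k3 n : 9 <= n -> (n * 3).+1 * 3 ^ (n * 3) <= n`! ^ 3.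
Proof.
elim: n => // n IH; rewrite leq_eqVlt => /orP [/eqP <- | hn].
  rewrite !factS fact0; lia.
have := IH hn.
rewrite factS expnMn.
have -> : 3 ^ (n.+1 * 3) = 3 ^ 3 * 3 ^ (n * 3) by rewrite mulSn expnD.
set X := 3 ^ (n * 3); set F := n`! ^ 3 => h.
have h1 : (3 + n * 3).+1 * 3 ^ 3 <= n.+1 ^ 3 * (n * 3).+1 by nia.
apply: (@leq_trans (n.+1 ^ 3 * ((n * 3).+1 * X))); last by rewrite leq_mul2l h orbT.
have := leq_mul h1 (leqnn X); lia.
Qed.

Lemma multi_dvd n k : n`! ^ k %| (n * k)`!.
Proof.
elim: k => [|k IH]; first by rewrite muln0.
have E : n * k.+1 = n * k + n by rewrite mulnS addnC.
rewrite E -(bin_fact (leq_addl (n * k) n)) addnK expnS.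
by apply: dvdn_mull; apply: dvdn_mul.
Qed.

Local Open Scope ring_scope.
Lemma fact_dvd k M : (k <= M)%N -> (k`! %| M`!)%N.
Proof.
elim: M => [|M IH]; first by rewrite leqn0 => /eqP ->.
rewrite leq_eqVlt => /orP [/eqP ->//|]; rewrite ltnS => /IH h.
by rewrite factS dvdn_mull.
Qed.

Lemma fact_geom M j : (M`! * M.+1 ^ j.+1 <= (M.+1 + j)`!)%N.
Proof.
elim: j => [|j IH]; first by rewrite addn0 expn1 factS mulnC.
rewrite addnS factS expnS mulnCA.
apply: leq_mul => //; lia.
Qed.

Section E.
Variable R : realType.
Definition c (k : nat) : R := (k`!%:R)^-1.

Lemma c_gt0 k : 0 < c k.
Proof. by rewrite /c invr_gt0 ltr0n fact_gt0. Qed.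

Lemma seriesE n : series (exp_coeff (1:R)) n = \sum_(0 <= k < n) c k.
Proof. rewrite /series /=; by apply: eq_bigr => k _; rewrite /exp_coeff /= expr1n div1r. Qed.

Lemma c_tail_le M j : c (M.+1 + j) <= c M * (M.+1%:R^-1) ^+ j.+1.
Proof.
rewrite /c exprVn -invfM -natrX -natrM lef_pV2 ?posrE ?ltr0n ?muln_gt0 ?expn_gt0 ?fact_gt0 //.
by rewrite ler_nat fact_geom.
Qed.

Lemma tail_bound M j : (0 < M)%N ->
  \sum_(M.+1 <= k < M.+1 + j) c k + c M * (M.+1%:R^-1) ^+ j / M%:R <= c M / M%:R.
Proof.
move=> M0; elim: j => [|j IH].
  by rewrite addn0 big_geq // add0r expr0 mulr1.
rewrite addnS big_nat_recr /=; last by rewrite leq_addr.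
apply: le_trans IH; rewrite -addrA lerD2l.
have h := c_tail_le M j.
set r := (M.+1%:R^-1 : R).
have hr : r * M.+1%:R = 1 by rewrite /r mulVf // pnatr_eq0.
have hM : (0:R) < M%:R by rewrite ltr0n.
have hc := c_gt0 M.
rewrite exprS in h *.
have hrj : 0 <= r ^+ j by rewrite exprn_ge0 // /r invr_ge0 ler0n.
have key : c M * (r * r ^+ j) / M%:R + c M * (r * r ^+ j) = c M * r ^+ j / M%:R.
  set t := r ^+ j; rewrite /r -natr1.
  field; rewrite -?natr1 ?pnatr_eq0 ?gt_eqF //.
rewrite /r in key hrj h *; by rewrite -key addrC lerD2l.
Qed.

Lemma e_lower M : \sum_(0 <= k < M) c k <= expR (1:R).
Proof.
rewrite /expR; apply: limr_ge; first exact: is_cvg_series_exp_coeff.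
exists M => // n /= hn; rewrite seriesE.
rewrite (@big_cat_nat _ _ _ M 0 n _ _ (leq0n M) hn) /= lerDl.
by apply: sumr_ge0 => i _; apply: ltW; apply: c_gt0.
Qed.

Lemma e_upper M : (0 < M)%N -> expR (1:R) <= \sum_(0 <= k < M.+1) c k + c M / M%:R.
Proof.
move=> M0.
rewrite /expR; apply: limr_le; first exact: is_cvg_series_exp_coeff.
exists M.+1 => // n /= hn; rewrite seriesE.
rewrite -(subnKC hn) (@big_cat_nat _ _ _ M.+1 0 _ _ _ (leq0n M.+1) (leq_addr _ _)) /= lerD2l.
apply: le_trans (tail_bound M (n - M.+1) M0); rewrite lerDl.
apply: divr_ge0; last exact: ler0n.
by apply: mulr_ge0; [apply: ltW; apply: c_gt0 | rewrite exprn_ge0 // invr_ge0 ler0n].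
Qed.

Lemma e_dist M (z : int) : (2 <= M)%N ->
  (M.+1%:R : R)^-1 < `|M`!%:R * expR (1:R) - z%:~R|.
Proof.
move=> M2.
set N := (\sum_(0 <= k < M.+1) (M`! %/ k`!))%N.
have hN : M`!%:R * \sum_(0 <= k < M.+1) c k = N%:R :> R.
  rewrite /N natr_sum big_distrr /=; apply: eq_big_nat => k /andP [_ hk].
  rewrite natr_div; first by rewrite /c.
    by apply: fact_dvd; rewrite -ltnS.
  by rewrite unitfE pnatr_eq0 -lt0n fact_gt0.
have hMf : (0:R) < M`!%:R by rewrite ltr0n fact_gt0.
have hlo := e_lower M.+3.
have hup := e_upper M (ltn_trans (isT : (0 < 1)%N) M2).
rewrite big_nat_recr //= big_nat_recr //= in hlo.
have c1 : M`!%:R * c M.+1 = (M.+1%:R : R)^-1.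
  rewrite /c factS natrM invfM mulrA mulrC mulrA mulVf ?mul1r //.
have c0 : M`!%:R * c M = 1.
  by rewrite /c mulfV // gt_eqF.
have c2 := c_gt0 M.+2.
have hM : (2:R) <= M%:R by rewrite (ler_nat R 2).
have hMi : (M%:R : R)^-1 <= 2^-1 by rewrite lef_pV2 ?posrE //; lra.
have hM1i : (M.+1%:R : R)^-1 <= 3^-1.
  by rewrite lef_pV2 ?posrE ?ltr0n // (ler_nat R 3) ltnS.
have lo : N%:R + (M.+1%:R : R)^-1 < M`!%:R * expR 1.
  rewrite -hN -c1 -mulrDr ltr_pM2l //.
  apply: lt_le_trans hlo; rewrite ltrDl; exact: c2.
have up : M`!%:R * expR 1 <= N%:R + (M%:R : R)^-1.
  rewrite -hN; apply: (@le_trans _ _ (M`!%:R * (\sum_(0 <= k < M.+1) c k + c M / M%:R))).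
    by rewrite ler_pM2l.
  by rewrite mulrDr mulrA c0 mul1r.
have ha0 : (0:R) < (M.+1%:R)^-1 by rewrite invr_gt0 ltr0n.
clearbody N.
move: (M`!%:R * expR (1:R)) ((M.+1%:R : R)^-1) ((M%:R : R)^-1) lo up ha0 hMi hM1i.
move=> X a b lo up ha0 hb ha.
case: (lerP z N%:Z) => hz.
  have hz' : z%:~R <= (N%:R : R) by rewrite -(ler_int R) in hz.
  rewrite ger0_norm; lra.
have hz' : (N%:R : R) + 1 <= z%:~R.
  have : (N%:Z + 1 <= z) by lia.
  by rewrite -(ler_int R) rmorphD /=.
rewrite ler0_norm; lra.
Qed.

Lemma e_ge : (65%:R / 24%:R : R) <= expR 1.
Proof.
apply: le_trans (e_lower 5).
rewrite !big_nat_recr //= big_geq // /c !factS fact0 /=.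
rewrite add0r; lra.
Qed.

Lemma one_plus_pow n : (0 < n)%N -> (1 + (n%:R)^-1) ^+ n <= expR (1:R).
Proof.
move=> n0.
have -> : expR (1:R) = expR ((n%:R)^-1) ^+ n.
  by rewrite -expRM_natl mulfV // pnatr_eq0 -lt0n.
apply: lerXn2r; rewrite ?nnegrE ?expR_ge0 ?addr_ge0 ?invr_ge0 ?ler0n //; exact: expR_ge1Dx.
Qed.

Lemma nn_le n : (0 < n)%N -> (n%:R : R) ^+ n <= n`!%:R * expR 1 ^+ n.-1.
Proof.
elim: n => // n IH _.
case: n IH => [|n] IH; first by rewrite expr0 mulr1 expr1.
have {}IH := IH isT.
rewrite /= factS natrM exprS -mulrA ler_pM2l ?ltr0n //.
have h := one_plus_pow n.+1 isT.
have e1 : (n.+2%:R : R) ^+ n.+1 = (n.+1%:R) ^+ n.+1 * (1 + (n.+1%:R)^-1) ^+ n.+1.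
  rewrite -exprMn mulrDr mulr1 mulfV ?pnatr_eq0 //.
  by rewrite -natr1.
rewrite e1 [expR 1 ^+ _]exprSr mulrA.
apply: ler_pM => //; rewrite exprn_ge0 // ?addr_ge0 ?invr_ge0 ?ler0n //.
Qed.

Lemma fact_lb n k : (0 < n)%N -> (0 < k)%N -> expR (1:R) <= n%:R / k%:R ->
  (n * k ^ n.-1 <= n`!)%N.
Proof.
move=> n0 k0 he.
rewrite -(ler_nat R) natrM natrX.
have h := nn_le n n0.
have hk : (0:R) < k%:R by rewrite ltr0n.
have hn : (0:R) < n%:R by rewrite ltr0n.
set F := (n`!%:R : R) in h *.
set N1 := (n%:R : R) ^+ n.-1.
set K1 := (k%:R : R) ^+ n.-1.
have N1p : 0 < N1 by rewrite exprn_gt0.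
have K1p : 0 < K1 by rewrite exprn_gt0.
have hF : 0 <= F by rewrite ler0n.
have he' : expR (1:R) ^+ n.-1 <= (n%:R / k%:R) ^+ n.-1.
  apply: lerXn2r => //; rewrite ?nnegrE ?expR_ge0 //.
have h2 : n%:R * N1 <= F * (N1 / K1).
  have -> : n%:R * N1 = (n%:R : R) ^+ n by rewrite /N1 -exprS prednK.
  apply: le_trans h _; rewrite /N1 /K1 -expr_div_n.
  by rewrite ler_wpM2l.
have h3 : n%:R * N1 * K1 <= F * N1.
  move: h2; rewrite -(ler_pM2r K1p) -[F * _ * K1]mulrA divfK //.
  by rewrite gt_eqF.
rewrite -(ler_pM2r N1p); move: h3; rewrite mulrAC //.
Qed.

Lemma pow_c j : ((j + 4)%:R ^+ 2 + 1 : R) <= (65%:R / 24%:R) ^+ (j + 3).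
Proof.
elim: j => [|j IH].
  rewrite add0n /= !exprS expr0; lra.
rewrite addSn [in X in _ <= X]exprS.
have hj : (0:R) <= (j + 4)%:R by rewrite ler0n.
have -> : ((j + 4).+1%:R : R) = (j + 4)%:R + 1 by rewrite -natr1.
have h2 : 65%:R / 24%:R * ((j + 4)%:R ^+ 2 + 1) <= 65%:R / 24%:R * (65%:R / 24%:R : R) ^+ (j + 3).
  by rewrite ler_wpM2l //; lra.
apply: le_trans h2. have hx4 : (4:R) <= (j + 4)%:R by rewrite (ler_nat R 4) leq_addl.
nra.
Qed.

Lemma big_k n k : (4 <= k)%N -> expR (1:R) <= n%:R / k%:R ->
  ((n * k).+1 * k ^ k <= n ^ k)%N.
Proof.
move=> k4 he.
have hk : (0:R) < k%:R by rewrite ltr0n; apply: leq_trans k4.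
rewrite -(ler_nat R) natrM !natrX.
set t := (n%:R / k%:R : R) in he.
have hn : (n%:R : R) = t * k%:R by rewrite /t divfK // gt_eqF.
have ht : 65%:R / 24%:R <= t := le_trans e_ge he.
have ht1 : 1 <= t by apply: le_trans ht; lra.
rewrite [in X in _ <= X]hn exprMn ler_pM2r ?exprn_gt0 //.
have -> : k = ((k - 4) + 4)%N by rewrite subnK.
set j := (k - 4)%N.
have hp := pow_c j.
have hcp : (65%:R / 24%:R : R) ^+ (j + 3) <= t ^+ (j + 3).
  apply: lerXn2r => //; rewrite ?nnegrE //; lra.
have -> : (j + 4 = (j + 3).+1)%N by rewrite addnS.
rewrite exprS -natr1 natrM hn.
have ek : ((j + 3).+1 = k)%N by rewrite /j; lia.
have ek' : (j + 4 = k)%N by rewrite /j; lia.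
rewrite ek; rewrite ek' in hp.
set T := t ^+ (j + 3) in hcp *.
set K := (k%:R : R) in hp *.
have hK : 0 <= K by rewrite /K ler0n.
have h1 : K ^+ 2 + 1 <= T by apply: le_trans hcp.
have h2 : t * (K ^+ 2 + 1) <= t * T by rewrite ler_wpM2l //; lra.
apply: le_trans h2; rewrite expr2; nra.
Qed.

Lemma e_notrat (r : rat) : expR (1:R) != ratr r.
Proof.
apply/eqP => E.
set d := `|denq r|%N.
have d0 : (0 < d)%N by rewrite /d absz_gt0 denq_neq0.
have hd : denq r = d%:Z by rewrite /d absz_denq.
set M := d.+2.
have hdM : (d %| M`!)%N by apply: dvdn_fact; apply/andP; split => //; rewrite /M; lia.
have := e_dist M ((M`! %/ d)%:Z * numq r) (isT : (2 <= d.+2)%N).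
rewrite E /ratr hd.
have -> : (M`!%:R : R) * ((numq r)%:~R / (d%:Z)%:~R) - ((M`! %/ d)%:Z * numq r)%:~R = 0.
  rewrite rmorphM /=.
  rewrite -[((M`! %/ d)%:Z)%:~R]/((M`! %/ d)%:R : R) -[(d%:Z)%:~R]/(d%:R : R).
  have dn : (d%:R : R) != 0 by rewrite pnatr_eq0 -lt0n.
  rewrite natr_div // ?unitfE //; field; exact: dn.
by rewrite normr0 ltNge invr_ge0 ler0n.
Qed.
End E.

Section CF.
Variable R : realType.

Definition notrat (x : R) := forall r : rat, x != ratr r.

Lemma cf_remS (x : R) i : cf_rem x i.+1 = cf_rem (cf_rem x 1) i.
Proof.
elim: i => [//|i IH].
transitivity ((cf_rem x i.+1 - (Num.floor (cf_rem x i.+1))%:~R)^-1); first by [].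
by rewrite IH.
Qed.

Lemma notrat_fl (x : R) : notrat x -> ((Num.floor x)%:~R < x) /\ (x < (Num.floor x)%:~R + 1).
Proof.
move=> Hx; have /andP[h1 h2] := floor_itv x; split; last by rewrite -intrD1.
rewrite lt_def h1 andbT eq_sym; apply/negP => /eqP E.
by move: (Hx (Num.floor x)%:~R); rewrite rmorph_int E eqxx.
Qed.

Lemma notrat_next (x : R) : notrat x -> notrat ((x - (Num.floor x)%:~R)^-1).
Proof.
move=> Hx r; apply/negP => /eqP E.
have : x = ratr (r^-1 + (Num.floor x)%:~R).
  rewrite rmorphD fmorphV; change (x = (ratr r)^-1 + ratr (Num.floor x)%:~R).
  by rewrite -E invrK rmorph_int subrK.
by move/eqP; rewrite (negbTE (Hx _)).
Qed.

Lemma notrat_rem (x : R) : notrat x -> forall i, notrat (cf_rem x i).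
Proof. move=> Hx; elim => [//|i IH] /=; exact: notrat_next. Qed.

Lemma rem_gt1 (x : R) : notrat x -> 1 < cf_rem x 1.
Proof.
move=> /notrat_fl [h1 h2] /=.
rewrite invf_gt1 ?subr_gt0 //; lra.
Qed.

Arguments notrat_fl {x}.
Arguments notrat_next {x}.
Arguments notrat_rem {x}.
Arguments rem_gt1 {x}.

Lemma cf_pqS (x : R) i : cf_pq x i.+1 = cf_pq (cf_rem x 1) i.
Proof. by rewrite /cf_pq cf_remS. Qed.

Lemma map_iotaS (x : R) l j :
  [seq cf_pq x i | i <- iota j.+1 l] = [seq cf_pq (cf_rem x 1) i | i <- iota j l].
Proof. elim: l j => [//|l IH] j /=; by rewrite cf_pqS IH. Qed.

Lemma conv_S (x : R) m :
  convergent x m.+1 = (cf_pq x 0)%:~R + (convergent (cf_rem x 1) m)^-1.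
Proof.
rewrite /convergent.
have -> : iota 0 m.+2 = 0%N :: iota 1 m.+1 by [].
rewrite map_cons map_iotaS.
by case: m.
Qed.

Lemma cf_main m : forall x : R, notrat x ->
  exists p q p' q' : int,
  [/\ 0 < q, 0 <= q', `|p * q' - p' * q| = 1,
      convergent x m = p%:~R / q%:~R
    & (x = (p%:~R * cf_rem x m.+1 + p'%:~R) / (q%:~R * cf_rem x m.+1 + q'%:~R)
    /\ (1 <= x -> 1 <= p /\ 0 <= p'))].
Proof.
elim: m => [|m IH] x Hx.
  have [h1 h2] := notrat_fl Hx.
  exists (Num.floor x), 1, 1, 0; split => //.
  - by rewrite mulr0 sub0r mulr1 normrN.
  - by rewrite /convergent /= /cf_pq divr1.
  split.
  - have hne : x - (Num.floor x)%:~R != 0 by rewrite subr_eq0 gt_eqF.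
    rewrite [cf_rem x 1]/=; field; by rewrite ?invr_eq0.
  - move=> x1; split => //; rewrite floor_ge_int //.
have Hx1 := notrat_rem Hx 1.
have [P [Q [P' [Q' [hQ hQ' hdet hconv [hx1 hpos]]]]]] := IH _ Hx1.
have g1 := rem_gt1 Hx.
have [hP hP'] := hpos (ltW g1).
set a := cf_pq x 0.
set y := cf_rem (cf_rem x 1) m.+1.
have hy : 1 < y := rem_gt1 (notrat_rem Hx1 m).
have [h1 h2] := notrat_fl Hx.
exists (a * P + Q), P, (a * P' + Q'), P'; split.
- by apply: lt_le_trans hP.
- exact: hP'.
- by rewrite -hdet -normrN; congr `|_|; ring.
- rewrite conv_S hconv invf_div.
  have hP0 : P%:~R != 0 :> rat by rewrite intr_eq0 gt_eqF // (lt_le_trans ltr01 hP).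
  rewrite rmorphD rmorphM /=; field; exact: hP0.
have hPr : (1:R) <= P%:~R by rewrite ler1z.
have hQr : (0:R) < Q%:~R by rewrite ltr0z.
have hP'r : (0:R) <= P'%:~R by rewrite ler0z.
have hQ'r : (0:R) <= Q'%:~R by rewrite ler0z.
split.
- rewrite cf_remS -/y.
  have ex : x = a%:~R + (cf_rem x 1)^-1 by rewrite /= invrK /a /cf_pq /=; ring.
  have n1 : P%:~R * y + P'%:~R != 0 by rewrite gt_eqF //; nra.
  have n2 : Q%:~R * y + Q'%:~R != 0 by rewrite gt_eqF //; nra.
  rewrite {1}ex hx1 invf_div -/y !rmorphD !rmorphM /=.
  by field; rewrite ?n1 ?n2.
- move=> hx; have ha : 1 <= a by rewrite /a /cf_pq floor_ge_int.
  split.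
  + nia.
  + nia.
Qed.

Lemma conv_approx (x : R) m : notrat x ->
  exists p q : int, [/\ 0 < q, denq (convergent x m) = q
    & `|q%:~R * x - p%:~R| < (q%:~R)^-1].
Proof.
move=> Hx.
have [p [q [p' [q' [hq hq' hdet hconv [hx _]]]]]] := cf_main m x Hx.
exists p, q; split => //.
- rewrite hconv coprimeq_den ?gt_eqF ?gtr0_norm //.
  rewrite -coprimezE; apply/coprimezP.
  case: (ler0P (p * q' - p' * q)) hdet => hs hd.
    by exists (- q', p'); rewrite /= -hd; ring.
  by exists (q', - p'); rewrite /= -hd; ring.
- set y := cf_rem x m.+1.
  have hy : 1 < y := rem_gt1 (notrat_rem Hx m).
  have hqr : (1:R) <= q%:~R by rewrite ler1z.
  have hq'r : (0:R) <= q'%:~R by rewrite ler0z.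
  have hpos : 0 < q%:~R * y + q'%:~R by nra.
  have E : q%:~R * x - p%:~R = (p'%:~R * q%:~R - p%:~R * q'%:~R) / (q%:~R * y + q'%:~R).
    rewrite hx -/y; field; by rewrite gt_eqF.
  rewrite E normrM normfV (gtr0_norm hpos).
  have -> : p'%:~R * q%:~R - p%:~R * q'%:~R = ((p' * q - p * q')%:~R : R).
    by rewrite rmorphB !rmorphM.
  rewrite -intr_norm.
  have -> : `|p' * q - p * q'| = 1 by rewrite -hdet -normrN; congr `|_|; ring.
  rewrite mul1r ltf_pV2 ?posrE //; last by apply: lt_le_trans hqr.
  nra.
Qed.
End CF.

Lemma C_ineq (R : realType) n k : (0 < k)%N -> (65 * k <= 24 * n)%N ->
  expR (1:R) <= n%:R / k%:R -> ((n * k).+1 * k ^ (n * k) <= n`! ^ k)%N.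
Proof.
move=> k0 h65 he.
case: k k0 h65 he => [//|[|[|[|k]]]] _ h65 he.
- by apply: k1; lia.
- by apply: k2; lia.
- by apply: k3; lia.
set K := k.+4.
have n0 : (0 < n)%N by lia.
have hf := @fact_lb R n K n0 isT he.
have hb := @big_k R n K isT he.
have eK : (K ^ (n * K) = K ^ K * K ^ (n.-1 * K))%N.
  by rewrite -expnD -mulSn prednK.
rewrite eK mulnA.
apply: (@leq_trans (n ^ K * K ^ (n.-1 * K))).
  by rewrite leq_mul2r hb orbT.
by rewrite mulnC expnM -expnMn mulnC leq_exp2r.
Qed.

Theorem proposition4p1 (R : realType) (m n k : nat) :
  (0 < k)%N ->
  denq (convergent (expR (1 : R)) m) = ((n`! ^ k)%N)%:Z ->
  (n%:R / k%:R : R) < expR (1 : R).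
Proof.
move=> k0 hden.
rewrite ltNge; apply/negP => he.
have hk : (0:R) < k%:R by rewrite ltr0n.
have h65 : (65 * k <= 24 * n)%N.
  rewrite -(ler_nat R) !natrM.
  have := le_trans (e_ge R) he.
  rewrite ler_pdivlMr // => h; lra.
have n3 : (3 <= n)%N by lia.
have Hx : @notrat R (expR 1) := @e_notrat R.
have [p [q [hq hdq hbound]]] := @conv_approx R _ m Hx.
set Q := (n`! ^ k)%N in hden.
have hqQ : q = Q%:Z by rewrite -hdq hden.
have Q0 : (0 < Q)%N by rewrite /Q expn_gt0 fact_gt0.
set M := (n * k)%N.
have M2 : (2 <= M)%N by rewrite /M; nia.
have hQM : (Q %| M`!)%N by apply: multi_dvd.
set L := (M`! %/ Q)%N.
have hLQ : (M`! = L * Q)%N by rewrite /L divnK.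
have L0 : (0 < L)%N by move: (fact_gt0 M); rewrite hLQ muln_gt0 => /andP [].
have hd := @e_dist R M (L%:Z * p) M2.
rewrite hqQ in hbound.
have eQ : ((Q%:Z)%:~R : R) = Q%:R by [].
rewrite eQ in hbound.
have eE : (M`!%:R : R) * expR 1 - (L%:Z * p)%:~R = L%:R * (Q%:R * expR 1 - p%:~R).
  rewrite hLQ natrM rmorphM /=.
  rewrite -[((L%:Z)%:~R)]/(L%:R : R).
  ring.
rewrite eE normrM ger0_norm ?ler0n // in hd.
have hQr : (0:R) < Q%:R by rewrite ltr0n.
have hLr : (0:R) < L%:R by rewrite ltr0n.
have h1 : (M.+1%:R : R)^-1 < L%:R * (Q%:R)^-1.
  apply: lt_trans hd _; by rewrite ltr_pM2l.
have h2 : (Q ^ 2 < M.+1`!)%N.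
  rewrite -(ltr_nat R) factS natrM hLQ natrM natrX.
  have hM1 : (0:R) < M.+1%:R by rewrite ltr0n.
  have haQ : (0:R) < M.+1%:R * Q%:R by apply: mulr_gt0.
  rewrite -(ltr_pM2r haQ) in h1.
  move: h1.
  have -> : (M.+1%:R : R)^-1 * (M.+1%:R * Q%:R) = Q%:R by field; rewrite gt_eqF.
  have -> : (L%:R : R) * (Q%:R)^-1 * (M.+1%:R * Q%:R) = M.+1%:R * L%:R by field; rewrite gt_eqF.
  move=> h; nra.
have hC := @C_ineq R n k k0 h65 he.
have h3 : (M.+1`! <= Q ^ 2)%N.
  rewrite factS expnS expn1.
  apply: (@leq_trans (M.+1 * (k ^ M * Q))).
    by rewrite leq_mul2l multi ?orbT //; lia.
  by rewrite mulnA leq_mul2r hC orbT.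
by move: h2; rewrite ltnNge h3.
Qed.
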